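(* Let $ABCD$ be a convex quadrilateral. Let $\alpha_1,\alpha_2,\alpha_3,\alpha_4$ be the four angles that the diagonal $AC$ makes with the sides, namely $\angle BAC,\angle BCA,\angle DAC,\angle DCA$. Let $\beta_1,\beta_2,\beta_3,\beta_4$ be the four angles that the diagonal $BD$ makes with the sides, namely $\angle ABD,\angle ADB,\angle CBD,\angle CDB$. Suppose $0<\varepsilon<\frac{\pi}{12}$ and $|\alpha_i-\frac{\pi}{4}|<\varepsilon$ for every $i$. Then $|\beta_j-\frac{\pi}{4}|<3\varepsilon$ for every $j$. *)

(* Defs.v *)
From Stdlib Require Import Reals.
Open Scope R_scope.

Definition point := (R * R)%type.

Definition cross (P Q S : point) : R :=
  (fst Q - fst P) * (snd S - snd P) - (snd Q - snd P) * (fst S - fst P).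

Definition dot (P Q S : point) : R :=
  (fst Q - fst P) * (fst S - fst P) + (snd Q - snd P) * (snd S - snd P).

Definition dist (P Q : point) : R :=
  sqrt ((fst Q - fst P) ^ 2 + (snd Q - snd P) ^ 2).

Definition angle (Q P S : point) : R :=
  acos (dot P Q S / (dist P Q * dist P S)).

(* ABCD is a (non-degenerate) convex quadrilateral with vertices in this
   cyclic order: all four turns A->B->C, B->C->D, C->D->A, D->A->B have the
   same strict orientation. *)
Definition convex_quad (A B C D : point) : Prop :=
  (0 < cross A B C /\ 0 < cross B C D /\ 0 < cross C D A /\ 0 < cross D A B) \/
  (cross A B C < 0 /\ cross B C D < 0 /\ cross C D A < 0 /\ cross D A B < 0).

(* Main.v *)
Require Import Defs.
From Stdlib Require Import Reals Lra Psatz.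
Open Scope R_scope.

Lemma angle_atan (Q P S : point) : cross P Q S <> 0 ->
  angle Q P S = PI / 2 - atan (dot P Q S / Rabs (cross P Q S)).
Proof.
  intros Hc.
  set (a := Rabs (cross P Q S)).
  assert (Ha : 0 < a) by (apply Rabs_pos_lt; exact Hc).
  set (r := dot P Q S / a).
  assert (Hd : Defs.dist P Q * Defs.dist P S = a * sqrt (1 + r²)).
  { unfold Defs.dist. rewrite <- sqrt_mult by (apply Rplus_le_le_0_compat; apply pow2_ge_0).
    rewrite <- (sqrt_square a) at 1 by lra.
    rewrite <- sqrt_mult by (unfold Rsqr; nra).
    f_equal. unfold Rsqr.
    assert (Ha2 : a * a = cross P Q S * cross P Q S).
    { unfold a. rewrite <- Rabs_mult. rewrite Rabs_right. ring. nra. }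
    replace (a * a * (1 + r * r)) with (a * a + dot P Q S * dot P Q S) by (unfold r; field; lra).
    rewrite Ha2. unfold cross, dot. ring. }
  unfold angle. rewrite Hd.
  assert (Hs : 0 < sqrt (1 + r²)).
  { apply sqrt_lt_R0. pose proof (Rle_0_sqr r). lra. }
  replace (dot P Q S / (a * sqrt (1 + r²))) with (sin (atan r)).
  2:{ rewrite sin_atan. unfold r. field. split; apply Rgt_not_eq; assumption. }
  rewrite <- cos_shift. apply acos_cos.
  pose proof (atan_bound r). lra.
Qed.

Lemma atan_lt_inv x y : atan x < atan y -> x < y.
Proof.
  intros H. destruct (Rlt_or_le x y) as [h|h]; auto.
  destruct (Rle_lt_or_eq_dec _ _ h) as [h'|h'].
  - apply atan_increasing in h'. lra.
  - subst. lra.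
Qed.

Lemma cos_ne x : - (PI/2) < x < PI/2 -> cos x <> 0.
Proof. intros [h1 h2]. apply Rgt_not_eq. apply cos_gt_0; lra. Qed.

Lemma tan_facts eps : 0 < eps -> eps < PI / 12 ->
  0 < tan eps < 1 /\
  tan (PI/4 + eps) = (1 + tan eps) / (1 - tan eps) /\
  tan (PI/4 - eps) = (1 - tan eps) / (1 + tan eps) /\
  tan (2 * eps) = 2 * tan eps / (1 - tan eps * tan eps).
Proof.
  intros h0 h1. pose proof PI_RGT_0.
  set (t := tan eps).
  assert (Ht : atan t = eps) by (apply atan_tan; lra).
  assert (Ht0 : 0 < t) by (apply atan_lt_inv; rewrite atan_0; lra).
  assert (Ht1 : t < 1) by (apply atan_lt_inv; rewrite atan_1; lra).
  split; [lra|].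
  split; [|split].
  - rewrite tan_plus; try (apply cos_ne; lra); rewrite tan_PI4; fold t; [field|]; lra.
  - rewrite tan_minus; try (apply cos_ne; lra); rewrite tan_PI4; fold t; [field|]; lra.
  - rewrite tan_2a; try (apply cos_ne; lra); fold t; [reflexivity|]; nra.
Qed.

Lemma bound_from c eps : 0 < eps -> eps < PI / 12 ->
  Rabs (atan c - PI/4) < eps ->
  tan (PI/4 - eps) < c < tan (PI/4 + eps).
Proof.
  intros h0 h1 h. pose proof PI_RGT_0.
  apply Rabs_def2 in h. split; apply atan_lt_inv; rewrite atan_tan; lra.
Qed.

Lemma I1 A B C: dot A B C + dot C B A = (fst C - fst A)^2 + (snd C - snd A)^2.
Proof. destruct A, B, C; unfold dot; simpl; ring. Qed.
Lemma I3 A B C: cross C B A = - cross A B C.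
Proof. destruct A, B, C; unfold cross; simpl; ring. Qed.
Lemma I5 A B C D: (dot A B C + dot C B A) * cross B A D = - (dot A B C * cross C D A + dot A D C * cross A B C).
Proof. destruct A, B, C, D; unfold cross, dot; simpl; ring. Qed.
Lemma I6 A B C D: let X := cross A B C in let Y := cross C D A in
  let d1 := dot A B C in let d2 := dot C B A in let d3 := dot A D C in let d4 := dot C D A in
  dot B A D * (2 * d1 * (X+Y) - X*(d1-d2+d4-d3)) = - cross B A D * (2*X*(X+Y) + d1*(d1-d2+d4-d3)).
Proof. destruct A, B, C, D; unfold cross, dot; simpl; ring. Qed.
Lemma I2 A C D: dot A D C + dot C D A = dot A C C.
Proof. destruct A, C, D; unfold dot; simpl; ring. Qed.
Lemma I1' A B C: dot A B C + dot C B A = dot A C C.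
Proof. destruct A, B, C; unfold dot; simpl; ring. Qed.

Lemma geom A B C D : 0 < cross A B C * cross C D A -> 0 < dot A B C -> 0 < dot A D C ->
  let aX := Rabs (cross A B C) in let aY := Rabs (cross C D A) in
  let N := dot A B C + dot C B A in
  let m := dot A B C - dot C B A + dot C D A - dot A D C in
  Rabs (cross C B A) = aX /\ Rabs (cross A D C) = aY /\
  dot A D C + dot C D A = N /\ 0 < N /\
  Rabs (cross B A D) * N = dot A B C * aY + dot A D C * aX /\
  dot B A D * (2 * dot A B C * (aX+aY) - aX*m) = Rabs (cross B A D) * (2*aX*(aX+aY) + dot A B C*m).
Proof.
  intros hXY h1 h3 aX aY N m.
  assert (E2 : dot A D C + dot C D A = N) by (unfold N; rewrite I2, I1'; reflexivity).
  assert (HN : 0 <= N) by (unfold N; rewrite I1; pose proof (pow2_ge_0 (fst C - fst A)); pose proof (pow2_ge_0 (snd C - snd A)); lra).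
  pose proof (I5 A B C D) as E5. pose proof (I6 A B C D) as E6. simpl in E6.
  fold N in E5. fold m in E6.
  rewrite I3. rewrite (I3 C D A). rewrite Rabs_Ropp, Rabs_Ropp.
  unfold aX, aY.
  destruct (Rlt_or_le 0 (cross A B C)) as [hX|hX].
  - assert (hY : 0 < cross C D A) by nra.
    assert (hc : N * cross B A D < 0) by nra.
    assert (hc' : cross B A D < 0) by nra.
    assert (HN' : 0 < N) by nra.
    rewrite (Rabs_right (cross A B C)) by lra. rewrite (Rabs_right (cross C D A)) by lra.
    rewrite (Rabs_left (cross B A D)) by lra.
    repeat split; auto; nra.
  - assert (hX' : cross A B C < 0) by (destruct hX; [auto| rewrite H in hXY; lra]).
    assert (hY : cross C D A < 0) by nra.
    assert (hc : 0 < N * cross B A D) by nra.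
    assert (hc' : 0 < cross B A D) by nra.
    assert (HN' : 0 < N) by nra.
    rewrite (Rabs_left (cross A B C)) by lra. rewrite (Rabs_left (cross C D A)) by lra.
    rewrite (Rabs_right (cross B A D)) by lra.
    repeat split; auto; nra.
Qed.
Lemma alg (dB cr aX aY st ct sd cd: R): 0<aX -> 0<aY -> ct<>0 -> cd<>0 -> cr<>0 ->
 dB * (2 * (st/ct*aX) * (aX+aY) - aX*(2*(aX+aY)*(sd/cd))) = cr * (2*aX*(aX+aY) + (st/ct*aX)*(2*(aX+aY)*(sd/cd))) ->
 dB/cr * (st*cd - ct*sd) = ct*cd + st*sd.
Proof.
  intros h1 h2 h3 h4 h5 H.
  assert (Hf : 2*aX*(aX+aY)/(ct*cd) <> 0).
  { unfold Rdiv. repeat apply Rmult_integral_contrapositive_currified; try lra.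
    apply Rinv_neq_0_compat. apply Rmult_integral_contrapositive_currified; auto. }
  apply (Rmult_eq_reg_l (2*aX*(aX+aY)/(ct*cd) * cr)); [|apply Rmult_integral_contrapositive_currified; auto].
  replace (2 * aX * (aX + aY) / (ct * cd) * cr * (dB / cr * (st * cd - ct * sd)))
    with (dB * (2 * (st/ct*aX) * (aX+aY) - aX*(2*(aX+aY)*(sd/cd)))) by (field; auto).
  rewrite H. field. auto.
Qed.

Lemma hyp_conv Q P S eps : cross P Q S <> 0 -> Rabs (angle Q P S - PI/4) < eps ->
  Rabs (atan (dot P Q S / Rabs (cross P Q S)) - PI/4) < eps.
Proof.
  intros hc h. rewrite angle_atan in h by auto.
  replace (atan (dot P Q S / Rabs (cross P Q S)) - PI/4)
    with (- (PI / 2 - atan (dot P Q S / Rabs (cross P Q S)) - PI / 4)) by lra.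
  rewrite Rabs_Ropp. exact h.
Qed.

Lemma core A B C D eps : 0 < cross A B C * cross C D A ->
  0 < eps -> eps < PI / 12 ->
  Rabs (angle B A C - PI / 4) < eps ->
  Rabs (angle B C A - PI / 4) < eps ->
  Rabs (angle D A C - PI / 4) < eps ->
  Rabs (angle D C A - PI / 4) < eps ->
  Rabs (angle A B D - PI / 4) < 3 * eps.
Proof.
  intros hXY he0 he1 h1 h2 h3 h4.
  pose proof PI_RGT_0 as HPI.
  assert (hX : cross A B C <> 0) by (intro e; rewrite e in hXY; lra).
  assert (hY : cross C D A <> 0) by (intro e; rewrite e in hXY; lra).
  assert (hX' : cross C B A <> 0) by (rewrite I3; lra).
  assert (hY' : cross A D C <> 0) by (rewrite (I3 C D A); lra).
  apply hyp_conv in h1; auto. apply hyp_conv in h2; auto.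
  apply hyp_conv in h3; auto. apply hyp_conv in h4; auto.
  destruct (tan_facts eps he0 he1) as [[ht0 ht1] [EU [EL EK]]].
  set (t := tan eps) in *.
  pose proof h1 as h1a.
  apply bound_from in h1; auto. apply bound_from in h2; auto.
  apply bound_from in h3; auto. apply bound_from in h4; auto.
  rewrite EU, EL in h1, h2, h3, h4.
  assert (hL : 0 < (1 - t) / (1 + t)) by (apply Rdiv_lt_0_compat; lra).
  set (aX := Rabs (cross A B C)) in *.
  set (aY := Rabs (cross C D A)) in *.
  assert (haX : 0 < aX) by (apply Rabs_pos_lt; auto).
  assert (haY : 0 < aY) by (apply Rabs_pos_lt; auto).
  assert (Ec2 : Rabs (cross C B A) = aX) by (rewrite I3, Rabs_Ropp; reflexivity).
  assert (Ec3 : Rabs (cross A D C) = aY) by (rewrite (I3 C D A), Rabs_Ropp; reflexivity).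
  rewrite Ec2 in h2. rewrite Ec3 in h3.
  set (c1 := dot A B C / aX) in *.
  set (c2 := dot C B A / aX) in *.
  set (c3 := dot A D C / aY) in *.
  set (c4 := dot C D A / aY) in *.
  assert (Ed1 : dot A B C = c1 * aX) by (unfold c1; field; lra).
  assert (Ed2 : dot C B A = c2 * aX) by (unfold c2; field; lra).
  assert (Ed3 : dot A D C = c3 * aY) by (unfold c3; field; lra).
  assert (Ed4 : dot C D A = c4 * aY) by (unfold c4; field; lra).
  assert (hd1 : 0 < dot A B C) by (rewrite Ed1; nra).
  assert (hd3 : 0 < dot A D C) by (rewrite Ed3; nra).
  destruct (geom A B C D hXY hd1 hd3) as [_ [_ [_ [HN [Ecr E6]]]]].
  fold aX aY in Ecr, E6.
  set (N := dot A B C + dot C B A) in *.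
  set (m := dot A B C - dot C B A + dot C D A - dot A D C) in *.
  set (k := m / (2 * (aX + aY))).
  set (K := 2 * t / (1 - t * t)).
  assert (hUL : (1 + t) / (1 - t) - (1 - t) / (1 + t) = 2 * K) by (unfold K; field; repeat split; nra).
  assert (Em : m = aX * (c1 - c2) + aY * (c4 - c3)) by (unfold m; rewrite Ed1, Ed2, Ed3, Ed4; ring).
  assert (Emk : m = 2 * (aX + aY) * k) by (unfold k; field; lra).
  assert (hk : - K < k < K).
  { assert (m < 2 * (aX + aY) * K) by (rewrite Em; nra).
    assert (- (2 * (aX + aY) * K) < m) by (rewrite Em; nra).
    split; nra. }
  set (th := atan c1) in *.
  set (de := atan k).
  assert (hde : -(2*eps) < de < 2*eps).
  { assert (EK2 : K = tan (2*eps)) by (unfold K; rewrite EK; reflexivity). rewrite EK2 in hk.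
    split.
    - replace (-(2*eps)) with (atan (- tan (2*eps))). unfold de.
      + apply atan_increasing; lra.
      + rewrite atan_opp, atan_tan; lra.
    - replace (2*eps) with (atan (tan (2*eps))). unfold de.
      + apply atan_increasing; lra.
      + rewrite atan_tan; lra. }
  pose proof (atan_bound c1) as bth. fold th in bth.
  pose proof (atan_bound k) as bde. fold de in bde.
  assert (cth : 0 < cos th) by (apply cos_gt_0; lra).
  assert (cde : 0 < cos de) by (apply cos_gt_0; lra).
  assert (Eth : c1 = sin th / cos th) by (unfold th; fold (tan (atan c1)); rewrite tan_atan; reflexivity).
  assert (Ede : k = sin de / cos de) by (unfold de; fold (tan (atan k)); rewrite tan_atan; reflexivity).
  apply Rabs_def2 in h1a.
  set (g := th - de).
  assert (hg : 0 < g < PI / 2) by (unfold g; lra).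
  assert (hcr : 0 < Rabs (cross B A D)).
  { assert (0 < Rabs (cross B A D) * N) by (rewrite Ecr; nra). nra. }
  assert (hcr' : cross B A D <> 0).
  { intro e. rewrite e, Rabs_R0 in hcr. lra. }
  rewrite angle_atan by exact hcr'.
  rewrite Ed1, Emk, Eth, Ede in E6.
  apply alg in E6; try lra.
  rewrite <- sin_minus, <- cos_minus in E6. fold g in E6.
  assert (sg : 0 < sin g) by (apply sin_gt_0; lra).
  assert (Er : dot B A D / Rabs (cross B A D) = tan (PI/2 - g)).
  { unfold tan. rewrite sin_shift, cos_shift. rewrite <- E6. field. lra. }
  rewrite Er, atan_tan by lra.
  replace (PI / 2 - (PI / 2 - g) - PI / 4) with ((th - PI/4) - de) by (unfold g; ring).
  apply Rabs_def1; lra.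
Qed.

Theorem lemma3p2p2 (A B C D : point) (eps : R) :
  convex_quad A B C D ->
  0 < eps -> eps < PI / 12 ->
  Rabs (angle B A C - PI / 4) < eps ->
  Rabs (angle B C A - PI / 4) < eps ->
  Rabs (angle D A C - PI / 4) < eps ->
  Rabs (angle D C A - PI / 4) < eps ->
  Rabs (angle A B D - PI / 4) < 3 * eps /\
  Rabs (angle A D B - PI / 4) < 3 * eps /\
  Rabs (angle C B D - PI / 4) < 3 * eps /\
  Rabs (angle C D B - PI / 4) < 3 * eps.
Proof.
  intros hq he0 he1 h1 h2 h3 h4.
  assert (hp : 0 < cross A B C * cross C D A).
  { destruct hq as [[a [b [c d]]] | [a [b [c d]]]]; nra. }
  assert (hp2 : 0 < cross A D C * cross C B A).
  { pose proof (I3 A B C); pose proof (I3 C D A); nra. }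
  assert (hp3 : 0 < cross C B A * cross A D C).
  { pose proof (I3 A B C); pose proof (I3 C D A); nra. }
  assert (hp4 : 0 < cross C D A * cross A B C) by nra.
  split; [|split; [|split]].
  - apply (core A B C D); auto.
  - apply (core A D C B); auto.
  - apply (core C B A D); auto.
  - apply (core C D A B); auto.
Qed.
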